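(* For integers $n,k\geqslant 1$, let $\mathfrak{A}_{n,k}$ be the set of words $\omega=(\omega_1,\dots,\omega_n)$ of length $n$ on the alphabet $\{1,\dots,k\}$ such that $\omega$ avoids the pattern $010$, every letter of $\{1,\dots,k\}$ occurs in $\omega$, and $\omega_1=k$. Let $\mathfrak{a}_{n,k}=\#\mathfrak{A}_{n,k}$. Then for all $n,k\geqslant 1$, $$\mathfrak{a}_{n,k}=\genfrac{[}{]}{0pt}{}{n}{n+1-k}.$$
   Context: $\genfrac{[}{]}{0pt}{}{n}{j}$ denotes the unsigned Stirling number of the first kind (the number of permutations of $n$ elements with exactly $j$ cycles), with the convention that it is $0$ when $j\leqslant 0$ and $n\geqslant 1$, or when $j>n$. A word (sequence) $\omega=(\omega_1,\dots,\omega_n)$ of integers contains a pattern $p=(p_1,\dots,p_k)$ if some subsequence $(\omega_{i_1},\dots,\omega_{i_k})$ with $i_1<\dots<i_k$ is order-isomorphic to $p$ (i.e. $\omega_{i_a}<\omega_{i_b}$ iff $p_a<p_b$ and $\omega_{i_a}=\omega_{i_b}$ iff $p_a=p_b$); otherwise $\omega$ avoids $p$. Thus avoiding $010$ means there are no $i<j<l$ with $\omega_i=\omega_l<\omega_j$. *)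

(* Defs.v *)
From mathcomp Require Import all_boot.
Set Implicit Arguments. Unset Strict Implicit. Unset Printing Implicit Defensive.

Fixpoint stirling1 (n j : nat) : nat :=
  match n, j with
  | 0, 0 => 1
  | 0, _.+1 => 0
  | _.+1, 0 => 0
  | m.+1, i.+1 => m * stirling1 m i.+1 + stirling1 m i
  end.

Definition avoids010 (w : seq nat) : bool :=
  [forall i : 'I_(size w), forall j : 'I_(size w), forall l : 'I_(size w),
     ~~ [&& i < j, j < l, nth 0 w i == nth 0 w l & nth 0 w i < nth 0 w j]].

(* A_{n,k}: words of length n on alphabet {1..k} (letters are elements of
   'I_k.+1 required to be nonzero), avoiding 010, using every letter of
   {1..k}, with first letter k. *)
Definition A_set (n k : nat) : {set n.-tuple 'I_k.+1} :=
  [set w : n.-tuple 'I_k.+1 |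
     [&& all (fun x : 'I_k.+1 => 0 < x) w,
         avoids010 (map (@nat_of_ord _) w),
         all (fun c => c \in map (@nat_of_ord _) w) (iota 1 k) &
         nth 0 (map (@nat_of_ord _) w) 0 == k]].

(* Main.v *)
Require Import Defs.
From mathcomp Require Import all_boot.
From mathcomp Require Import zify.

Definition av (s : seq nat) := forall a b, a < b -> ~~ subseq [:: a; b; a] s.

Lemma L1 (w r : seq nat) i : i < size w -> subseq r (drop i.+1 w) ->
  subseq (nth 0 w i :: r) w.
Proof.
move=> hi hr; set x := nth 0 w i.
rewrite -(cat_take_drop i w) (drop_nth 0 hi) -/x.
by rewrite -[x :: r]cat0s cat_subseq ?sub0seq //= eqxx.
Qed.

Lemma L2 (w r : seq nat) k i : k <= i -> i < size w -> subseq r (drop i.+1 w) ->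
  subseq (nth 0 w i :: r) (drop k w).
Proof.
move=> ki hi hr.
have -> : nth 0 w i = nth 0 (drop k w) (i - k) by rewrite nth_drop subnKC.
apply: L1; first by rewrite size_drop; lia.
by rewrite drop_drop; have -> : (i - k).+1 + k = i.+1 by lia.
Qed.

Lemma L3 (w r : seq nat) x m k : size w - k <= m -> subseq (x :: r) (drop k w) ->
  exists i, [/\ k <= i, i < size w, nth 0 w i = x & subseq r (drop i.+1 w)].
Proof.
elim: m k => [|m IH] k hm.
  by rewrite drop_oversize //; lia.
case: (ltnP k (size w)) => hk; last by rewrite drop_oversize.
rewrite (drop_nth 0 hk) /=.
case: eqP => [e|_] h.
  by exists k; split.
have [i [h1 h2 h3 h4]] := IH k.+1 ltac:(lia) h.
by exists i; split => //; lia.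
Qed.

Lemma avoidsE w : avoids010 w <-> av w.
Proof.
split.
  move=> /forallP H a b ab; apply/negP => sub.
  have [i [_ hi ei s1]] := L3 _ _ _ (size w) (0) (leq_subr _ _) (etrans (congr1 _ (drop0 w)) sub).
  have [j [hij hj ej s2]] := L3 _ _ _ (size w) (i.+1) (leq_subr _ _) s1.
  have [l [hjl hl el _]] := L3 _ _ _ (size w) (j.+1) (leq_subr _ _) s2.
  move: (H (Ordinal hi)) => /forallP /(_ (Ordinal hj)) /forallP /(_ (Ordinal hl)) /=.
  by rewrite ei ej el eqxx ab hij hjl.
move=> H; apply/forallP => i; apply/forallP => j; apply/forallP => l.
apply/negP => /and4P [hij hjl /eqP heq hlt].
move: (H _ _ hlt) => /negP; apply.
rewrite {2}heq -[X in subseq _ X]drop0; apply: L2 => //.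
apply: L2 => //; apply: L2 => //.
by rewrite sub0seq.
Qed.


Definition P n k (s : seq nat) :=
  [/\ size s = n, all (fun x => 0 < x <= k) s, av s,
      all (fun c => c \in s) (iota 1 k) & nth 0 s 0 = k].

Definition mkT n k (s : seq nat) : n.-tuple 'I_k.+1 :=
  insubd (nseq_tuple n ord0) (map (@inord k) s).

Lemma mkTK n k s : size s = n -> all (fun x => x <= k) s ->
  map val (mkT n k s) = s.
Proof.
move=> hs ha; rewrite /mkT val_insubd size_map hs eqxx -map_comp.
rewrite -[RHS]map_id; apply/eq_in_map => x /(allP ha) hx /=.
by rewrite inordK.
Qed.

Lemma mkT_val n k (w : n.-tuple 'I_k.+1) : mkT n k (map val w) = w.
Proof.
apply: val_inj; rewrite /mkT val_insubd !size_map size_tuple eqxx -map_comp.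
rewrite -[RHS]map_id; apply/eq_in_map => x _ /=.
by rewrite inord_val.
Qed.

Lemma A_setP n k (w : n.-tuple 'I_k.+1) : w \in A_set n k <-> P n k (map val w).
Proof.
rewrite inE; split.
  case/and4P => H1 H2 H3 /eqP H4; split => //.
  - by rewrite size_map size_tuple.
  - apply/allP => x /mapP [y yw ->]; rewrite (allP H1 _ yw) /=.
    by rewrite -ltnS ltn_ord.
  - by apply/avoidsE.
case => H1 H2 H3 H4 H5; apply/and4P; split => //.
- apply/allP => x xw; have /(allP H2) : val x \in map val w by apply: map_f.
  by case/andP.
- by apply/avoidsE.
- by apply/eqP.
Qed.

Lemma P_mkT n k s : P n k s -> mkT n k s \in A_set n k /\ map val (mkT n k s) = s.
Proof.
move=> HP; have e : map val (mkT n k s) = s.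
  case: HP => h1 h2 _ _ _; apply: mkTK => //.
  by apply/allP => x /(allP h2) /andP [].
by split => //; apply/A_setP; rewrite e.
Qed.

Lemma bij_card (U V : finType) (X : {set U}) (Y : {set V}) (f : U -> V) (g : V -> U) :
  {in X, forall x, f x \in Y} -> {in Y, forall y, g y \in X} ->
  {in X, cancel f g} -> {in Y, cancel g f} -> #|X| = #|Y|.
Proof.
move=> fX gY fK gK.
rewrite -(card_in_imset (f:=f) (D:=X)); last first.
  by move=> x y hx hy e; rewrite -(fK x hx) -(fK y hy) e.
suff -> : [set f x | x in X] = Y by []. apply/setP => y; apply/imsetP/idP.
  by case => x hx ->; apply: fX.
by move=> hy; exists (g y); [apply: gY | rewrite gK].
Qed.


Definition dup1 (t : seq nat) := take (index 1 t) t ++ 1 :: drop (index 1 t) t.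

Lemma rem_cat1 (u v : seq nat) x : x \notin u -> rem x (u ++ x :: v) = u ++ v.
Proof.
elim: u => [|y u IH] /=; first by rewrite eqxx.
by rewrite in_cons negb_or eq_sym => /andP [/negbTE -> /IH ->].
Qed.

Lemma index_cat1 (u v : seq nat) x : x \notin u -> index x (u ++ x :: v) = size u.
Proof.
move=> h; rewrite index_cat (negbTE h) /= eqxx addn0 //.
Qed.

Lemma decomp (s : seq nat) x : x \in s -> exists u v, s = u ++ x :: v /\ x \notin u.
Proof.
elim: s => [|y s IH] //=; rewrite in_cons.
case: (eqVneq x y) => [->|nxy] /= h.
  by exists [::], s.
have [u [v [-> hu]]] := IH h.
by exists (y :: u), v; rewrite /= in_cons negb_or nxy hu.
Qed.

Lemma subseqE (z x : nat) r s : subseq (z :: r) (x :: s) = if z == x then subseq r s else subseq (z :: r) s.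
Proof. by rewrite /=; case: eqP. Qed.

Lemma sub_dedup (r u v : seq nat) x : sorted (fun a b => a != b) r ->
  subseq r (u ++ x :: x :: v) -> subseq r (u ++ x :: v).
Proof.
elim: u r => [|y u IH] r.
  case: r => [|z r] // hs; rewrite !cat0s !subseqE.
  case: eqP => [ezx|nzx] //; rewrite ?subseqE //.
  case: r hs => [|z' r] hs; first by rewrite !sub0seq.
  move/andP: hs => [nz _]; rewrite subseqE ifN //.
  by rewrite -ezx eq_sym.
case: r => [|z r] // hs; rewrite !cat_cons !subseqE.
have hs' : sorted (fun a b => a != b) r by case: r hs => //= ? ? /andP [].
case: eqP => _; first by apply: IH.
exact: IH.
Qed.

Lemma contig (u v : seq nat) : av (u ++ 1 :: v) -> all (fun x => 0 < x) v -> 1 \in v ->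
  exists v', v = 1 :: v'.
Proof.
case: v => [|y v] //= hav /andP [hy _]; rewrite in_cons.
case: (eqVneq y 1) => [->|ny1] /=; first by exists v.
move=> h1; have lt : 1 < y by lia.
move: (hav _ _ lt) => /negP []; rewrite -[[:: 1; y; 1]]cat0s cat_subseq ?sub0seq //.
by rewrite subseqE eqxx subseqE eqxx sub1seq.
Qed.

Lemma head_same (u v w : seq nat) x : nth 0 (u ++ x :: v) 0 = nth 0 (u ++ x :: w) 0.
Proof. by case: u. Qed.

Lemma dup_equiv n k (u v : seq nat) :
  P n.+1 k (u ++ 1 :: 1 :: v) <-> P n k (u ++ 1 :: v).
Proof.
have hm : (u ++ 1 :: 1 :: v) =i (u ++ 1 :: v).
  by move=> c; rewrite !mem_cat !in_cons; case: (c == 1); rewrite ?orbT.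
split; case => h1 h2 h3 h4 h5; split.
- by move: h1; rewrite !size_cat /=; lia.
- by apply/allP => c; rewrite -hm => /(allP h2).
- move=> a b ab; apply/negP => hs; move: (h3 _ _ ab) => /negP; apply.
  apply: subseq_trans hs _; apply: cat_subseq (subseq_refl u) _.
  by rewrite subseqE eqxx subseq_cons.
- by apply/allP => c /(allP h4); rewrite hm.
- by rewrite -h5; apply: head_same.
- by move: h1; rewrite !size_cat /=; lia.
- by apply/allP => c; rewrite hm => /(allP h2).
- move=> a b ab; apply/negP => hs; move: (h3 _ _ ab) => /negP; apply.
  apply: sub_dedup hs => /=; rewrite (ltn_eqF ab) andbT; lia.
- by apply/allP => c /(allP h4); rewrite hm.
- by rewrite -h5; apply: head_same.
Qed.

Lemma count0 (u : seq nat) x : x \notin u -> count_mem x u = 0.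
Proof. by move=> h; apply/eqP; rewrite -leqn0 leqNgt -has_count has_pred1. Qed.

Lemma B1_f n k s : P n.+1 k s -> 1 < count_mem 1 s ->
  P n k (rem 1 s) /\ dup1 (rem 1 s) = s.
Proof.
move=> HP hc.
have h1 : 1 \in s by apply/negPn/negP => /count_memPn e; move: hc; rewrite e.
have [u [v [es hu]]] := @decomp _ _ h1.
have h1v : 1 \in v.
  move: hc; rewrite es count_cat count0 // add0n /= => hc.
  by apply/negPn/negP => /count_memPn e; move: hc; rewrite e.
case: (HP) => _ hall hav _ _.
have [v' ev] : exists v', v = 1 :: v'.
  apply: (@contig u v _ _ h1v); first by rewrite -es.
  by apply/allP => c cv; have /(allP hall) /andP [] : c \in s by rewrite es mem_cat in_cons cv !orbT.
subst; rewrite rem_cat1 //; split; first by apply/dup_equiv.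
by rewrite /dup1 index_cat1 // take_size_cat // drop_size_cat.
Qed.

Lemma B1_g n k t : 0 < k -> P n k t ->
  [/\ P n.+1 k (dup1 t), 1 < count_mem 1 (dup1 t) & rem 1 (dup1 t) = t].
Proof.
move=> k0 HP.
have h1 : 1 \in t.
  case: HP => _ _ _ /allP h _; apply: h; rewrite mem_iota; lia.
have [u [v [et hu]]] := @decomp _ _ h1; subst.
rewrite /dup1 index_cat1 // take_size_cat // drop_size_cat //.
rewrite rem_cat1 //; split => //; first by apply/dup_equiv.
by rewrite count_cat /=; lia.
Qed.


Definition ins i (t : seq nat) := take i t ++ 1 :: drop i t.

Lemma mem_ins (u v : seq nat) x y : (x \in u ++ y :: v) = (x == y) || (x \in u ++ v).
Proof. by rewrite !mem_cat in_cons orbCA. Qed.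

Lemma map_pred_succ (t : seq nat) : map predn (map succn t) = t.
Proof. by rewrite -map_comp map_id. Qed.

Lemma map_succ_pred (t : seq nat) : all (fun x => 0 < x) t -> map succn (map predn t) = t.
Proof.
move=> h; rewrite -map_comp -[RHS]map_id; apply/eq_in_map => x /(allP h) /= hx.
by rewrite prednK.
Qed.

Lemma B2_f n k s : 0 < n -> P n.+1 k s -> count_mem 1 s <= 1 ->
  [/\ 0 < index 1 s, index 1 s <= n, P n k.-1 (map predn (rem 1 s))
    & ins (index 1 s) (map succn (map predn (rem 1 s))) = s].
Proof.
move=> n0 HP hc; case: (HP) => hsz hall hav hiota hhead.
have k0 : 0 < k.
  have : nth 0 s 0 \in s by rewrite mem_nth // hsz.
  by move=> /(allP hall); rewrite hhead => /andP [].
have h1 : 1 \in s by apply: (allP hiota); rewrite mem_iota; lia.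
have [u [v [es hu]]] := @decomp _ _ h1.
have hv : 1 \notin v.
  move: hc; rewrite es count_cat (count_memPn hu) add0n /= => hc.
  by apply/count_memPn; move: hc; rewrite add1n ltnS leqn0 => /eqP.
have hletters : forall x, x \in u ++ v -> 1 < x <= k.
  move=> x hx; have : x \in s by rewrite es mem_ins hx orbT.
  move=> /(allP hall) /andP [a b]; rewrite b andbT ltn_neqAle a andbT eq_sym.
  by apply/eqP => e; move: hx; rewrite e mem_cat (negbTE hu) (negbTE hv).
have hpos : all (fun x => 0 < x) (u ++ v).
  by apply/allP => x /hletters; lia.
have hu0 : 0 < size u.
  case: u es hu hletters hpos => [|y u] //= es _ hletters _.
  case: v es hv hletters => [|y v] es _ hletters.
    by move: hsz; rewrite es /=; lia.
  by have := hletters y; rewrite in_cons eqxx => /(_ isT); move: hhead; rewrite es /=; lia.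
have hsz' : size u + size v = n by move: hsz; rewrite es size_cat /=; lia.
rewrite es index_cat1 // rem_cat1 // map_succ_pred //.
rewrite /ins take_size_cat // drop_size_cat //; split => //; first by rewrite -hsz' leq_addr.
split.
- by rewrite size_map size_cat.
- by apply/allP => x /mapP [y /hletters hy ->]; lia.
- move=> a b ab; apply/negP => sub.
  have := map_subseq succn sub; rewrite map_succ_pred //= => sub'.
  have ab' : a.+1 < b.+1 by [].
  move: (hav _ _ ab') => /negP; apply; apply: subseq_trans sub' _.
  by rewrite es; apply: cat_subseq (subseq_refl u) (subseq_cons v 1).
- apply/allP => c; rewrite mem_iota => hc'.
  have : c.+1 \in s by apply: (allP hiota); rewrite mem_iota; lia.
  rewrite es mem_ins /= => hc2.
  have -> : c = predn c.+1 by [].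
  apply: map_f; case/orP: hc2 => // /eqP e; lia.
- case: u hu0 es {hu hletters hpos hsz'} => [|y u] // _ es.
  by move: hhead; rewrite es /= => ->.
Qed.

Lemma B2_g n k p t : p < n -> P n k.-1 t ->
  [/\ P n.+1 k (ins p.+1 (map succn t)), count_mem 1 (ins p.+1 (map succn t)) <= 1,
      index 1 (ins p.+1 (map succn t)) = p.+1
    & map predn (rem 1 (ins p.+1 (map succn t))) = t].
Proof.
move=> pn HP; case: (HP) => hsz hall hav hiota hhead.
have tpos : forall y, y \in t -> 0 < y <= k.-1 by move=> y /(allP hall).
have k1 : 0 < k.-1.
  have : nth 0 t 0 \in t by rewrite mem_nth // hsz; exact: leq_ltn_trans (leq0n p) pn.
  by move=> /tpos; rewrite hhead => /andP [].
set t' := map succn t.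
have ht' : forall x, x \in t' -> 1 < x <= k.
  by move=> x /mapP [y /tpos hy ->]; lia.
have n1t : 1 \notin t' by apply/negP => /ht'.
have szt : size t' = n by rewrite size_map.
have hu : 1 \notin take p.+1 t' by apply: contra n1t; apply: mem_take.
have hv : 1 \notin drop p.+1 t' by apply: contra n1t; apply: mem_drop.
have szu : size (take p.+1 t') = p.+1 by rewrite size_take szt; case: ifP => //; lia.
have hrem : rem 1 (ins p.+1 t') = t' by rewrite /ins rem_cat1 // cat_take_drop.
have hcnt : count_mem 1 (ins p.+1 t') = 1.
  rewrite /ins count_cat (count_memPn hu) /= (count_memPn hv); by [].
split.
- split.
  + by rewrite /ins size_cat /= addnS -size_cat cat_take_drop szt.
  + apply/allP => x; rewrite /ins mem_ins cat_take_drop.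
    case/orP => [/eqP -> | /ht']; lia.
  + move=> a b ab; apply/negP => sub.
    case: (eqVneq a 1) => [ea | na].
      have := leq_count_subseq (pred1 1) sub.
      by rewrite hcnt ea /= ?eqxx; lia.
    case: (eqVneq b 1) => [eb | nb].
      have : a \in ins p.+1 t' by apply: (mem_subseq sub); rewrite in_cons eqxx.
      rewrite /ins mem_ins cat_take_drop => /orP [/eqP e| /ht']; lia.
    have : subseq [:: a; b; a] [seq x <- ins p.+1 t' | predC1 1 x].
      by rewrite subseq_filter sub /= na nb.
    rewrite /ins filter_cat /= -filter_cat cat_take_drop.
    have -> : [seq x <- t' | x != 1] = t'.
      by apply/all_filterP/allP => x /ht'; lia.
    move=> sub2.
    have a2 : 1 < a by have := mem_subseq sub2 (mem_head _ _) => /ht'; lia.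
    have := map_subseq predn sub2; rewrite map_pred_succ /= => sub3.
    have ab' : a.-1 < b.-1 by lia.
    by move: (hav _ _ ab') => /negP.
  + apply/allP => c; rewrite mem_iota => hc.
    rewrite /ins mem_ins cat_take_drop.
    case: (eqVneq c 1) => [//|nc] /=.
    have : c.-1 \in t by apply: (allP hiota); rewrite mem_iota; lia.
    move=> /(map_f succn); rewrite prednK //; lia.
  + rewrite /ins nth_cat szu /= nth_take // /t' (nth_map 0); last by lia.
    by rewrite hhead; lia.
- by rewrite hcnt.
- by rewrite /ins index_cat1.
- by rewrite hrem map_pred_succ.
Qed.


Arguments B1_f {n k s}.
Arguments B1_g {n k t}.
Arguments B2_f {n k s}.
Arguments B2_g {n k p t}.
Arguments P_mkT {n k s}.

Lemma rec n k : 0 < n -> 0 < k ->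
  #|A_set n.+1 k| = #|A_set n k| + n * #|A_set n k.-1|.
Proof.
case: n => [//|m] n0 k0.
set A := A_set m.+2 k.
set C := [set w : m.+2.-tuple 'I_k.+1 | 1 < count_mem 1 (map val w)].
rewrite -(cardsID C A); congr (_ + _).
  apply: (@bij_card _ _ _ _ (fun w : m.+2.-tuple 'I_k.+1 => mkT m.+1 k (rem 1 (map val w)))
                   (fun t : m.+1.-tuple 'I_k.+1 => mkT m.+2 k (dup1 (map val t)))).
  - move=> w; rewrite inE => /andP [/A_setP hP]; rewrite inE => hc.
    by have [h _] := B1_f hP hc; case: (P_mkT h).
  - move=> t /A_setP hP; have [h1 h2 _] := B1_g k0 hP.
    have [hin e] := P_mkT h1.
    by rewrite inE hin inE e.
  - move=> w; rewrite inE => /andP [/A_setP hP]; rewrite inE => hc.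
    have [h e] := B1_f hP hc; have [_ ->] := P_mkT h.
    by rewrite e mkT_val.
  - move=> t /A_setP hP; have [h1 _ e] := B1_g k0 hP.
    have [_ ->] := P_mkT h1.
    by rewrite e mkT_val.
rewrite -[X in _ = X * _]card_ord -cardsT -cardsX.
refine (@bij_card _ _ (A :\: C) (setX [set: 'I_m.+1] (A_set m.+1 k.-1))
  (fun w : m.+2.-tuple 'I_k.+1 => ((inord (index 1 (map val w)).-1 : 'I_m.+1),
                  mkT m.+1 k.-1 (map predn (rem 1 (map val w)))))
  (fun pt : 'I_m.+1 * m.+1.-tuple 'I_k.-1.+1 => mkT m.+2 k (ins (pt.1 : nat).+1 (map succn (map val pt.2)))) _ _ _ _).
- move=> w; rewrite inE => /andP [hc /A_setP hP].
  have hc' : count_mem 1 (map val w) <= 1 by move: hc; rewrite inE => h; rewrite leqNgt; exact: h.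
  have [_ _ h _] := B2_f n0 hP hc'.
  by rewrite in_setX in_setT /=; case: (P_mkT h).
- case=> p t; rewrite in_setX in_setT /= => /A_setP hP.
  have [h1 h2 _ _] := B2_g (ltn_ord p) hP.
  have [hin e] := P_mkT h1.
  rewrite in_setD; apply/andP; split; last exact: hin.
  rewrite inE -leqNgt.
  have hh : count_mem 1 (map val (mkT m.+2 k (ins p.+1 (map succn (map val t))))) <= 1 by rewrite e.
  exact: hh.
- move=> w; rewrite inE => /andP [hc /A_setP hP].
  have hc' : count_mem 1 (map val w) <= 1 by move: hc; rewrite inE => h; rewrite leqNgt; exact: h.
  have [i0 i1 h e] := B2_f n0 hP hc'.
  have [_ ->] := P_mkT h.
  have i2 : (index 1 (map val w)).-1 < m.+1 := leq_trans (eq_leq (prednK i0)) i1.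
  cbn [fst snd]; rewrite inordK // prednK //.
  by rewrite e mkT_val.
- case=> p t; rewrite in_setX in_setT /= => /A_setP hP.
  have [h1 _ ei e] := B2_g (ltn_ord p) hP.
  have [_ ->] := P_mkT h1.
  cbn [fst snd]; rewrite ei e mkT_val.
  by rewrite -[p.+1.-1]/(val p) inord_val.
Qed.

Lemma stirling0 n j : n < j -> stirling1 n j = 0.
Proof.
elim: n j => [|n IH] [|j] //= h.
by rewrite !IH //; lia.
Qed.

Lemma A0 n : 0 < n -> #|A_set n 0| = 0.
Proof.
move=> n0; apply: eq_card0 => w; apply/negP => /A_setP [h1 h2 _ _ _].
have : nth 0 (map val w) 0 \in map val w by rewrite mem_nth // h1.
by move=> /(allP h2) /=; lia.
Qed.

Lemma base k : 0 < k -> #|A_set 1 k| = stirling1 1 (2 - k).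
Proof.
move=> k0; case: (eqVneq k 1) => [->|nk].
  have -> : stirling1 1 (2 - 1) = #|[set: unit]| by rewrite cardsT card_unit.
  refine (@bij_card _ _ (A_set 1 1) [set: unit] (fun _ : 1.-tuple 'I_2 => tt) (fun _ : unit => mkT 1 1 [:: 1]) _ _ _ _).
  - by move=> *; rewrite inE.
  - have hP : P 1 1 [:: 1].
      split => // a b ab; apply/negP => /size_subseq //.
    by move=> _ _; case: (P_mkT hP).
  - move=> w /A_setP [h1 _ _ _ h5].
    have e : map val w = [:: 1].
      by case: (map val w) h1 h5 => [|x [|]] //= _ ->.
    by rewrite -[RHS]mkT_val e.
  - by move=> [].
have -> : 2 - k = 0 by lia.
apply: eq_card0 => w; apply/negP => /A_setP [h1 _ _ h4 h5].
have : 1 \in map val w by apply: (allP h4); rewrite mem_iota; lia.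
by case: (map val w) h1 h5 => [|x [|]] //= _ ->; rewrite in_cons orbF => /eqP; lia.
Qed.

Lemma main' n : 0 < n -> forall k, 0 < k -> #|A_set n k| = stirling1 n (n.+1 - k).
Proof.
elim: n => [//|n IH] _ k k0.
case: (posnP n) => [->|npos]; first exact: base.
rewrite rec // (IH npos k k0).
have hk1 : n * #|A_set n k.-1| = n * stirling1 n (n.+1 - k.-1).
  case: (eqVneq k 1) => [->|nk]; last by rewrite (IH npos) //; lia.
  by rewrite A0 // stirling0 //; lia.
rewrite hk1.
case: (leqP k n.+1) => hk.
  have -> : n.+2 - k = (n.+1 - k).+1 by lia.
  have -> : n.+1 - k.-1 = (n.+1 - k).+1 by lia.
  by rewrite /= addnC.
have -> : n.+2 - k = 0 by lia.
have -> : n.+1 - k.-1 = 0 by lia.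
have -> : n.+1 - k = 0 by lia.
have -> : stirling1 n 0 = 0 by case: (n) npos.
by rewrite muln0.
Qed.

Theorem mainTheorem1 (n k : nat) : 1 <= n -> 1 <= k ->
  #|A_set n k| = stirling1 n (n.+1 - k).
Proof.
move=> hn hk; exact: main' hn k hk.
Qed.
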